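(* There exists $\lambda_0>0$ such that for every $\lambda\ge\lambda_0$ the function $\beta\mapsto \rho\,\phi(a)+\gamma\,\Phi(a)$ is strictly increasing on $(0,\infty)$, where $n,\rho,a,\gamma$ are the functions of $(\beta,\lambda)$ defined in the context.
   Context: $\phi$ and $\Phi$ denote the standard normal density and distribution function. For $\lambda>0$ and $\beta\ge 0$ set $n=\lambda+\beta\sqrt{\lambda}$, $\rho=\lambda/n$, $a=\sqrt{-2n(1-\rho+\ln\rho)}$ (note $1-\rho+\ln\rho\le 0$), and $\gamma=(n-\lambda)/\sqrt{n}=\beta\sqrt{\rho}$. *)

(* Defs.v *)
From Stdlib Require Import Reals Lra ClassicalEpsilon.
Open Scope R_scope.

Definition phi (x : R) : R := / sqrt (2 * PI) * exp (- x ^ 2 / 2).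

Definition RInt_is (f : R -> R) (a b v : R) : Prop :=
  exists pr : Riemann_integrable f a b, RiemannInt pr = v.

Definition Phi_is (x v : R) : Prop :=
  forall eps, 0 < eps -> exists M0, forall M, M0 <= M ->
    exists w, RInt_is phi (- M) x w /\ Rabs (w - v) < eps.

Definition Phi (x : R) : R := epsilon (inhabits 0) (fun v => Phi_is x v).

Definition nn (lam beta : R) : R := lam + beta * sqrt lam.
Definition rho (lam beta : R) : R := lam / nn lam beta.
Definition aa (lam beta : R) : R :=
  sqrt (- 2 * nn lam beta * (1 - rho lam beta + ln (rho lam beta))).
Definition gam (lam beta : R) : R := (nn lam beta - lam) / sqrt (nn lam beta).

Definition G (lam beta : R) : R :=
  rho lam beta * phi (aa lam beta) + gam lam beta * Phi (aa lam beta).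

(* Main.v *)
Require Import Defs.
From Stdlib Require Import Reals Lra ClassicalEpsilon.
From Coquelicot Require Import Coquelicot.
Open Scope R_scope.

Lemma exp_le_mono x y : x <= y -> exp x <= exp y.
Proof. intros [H|H]. left; now apply exp_increasing. subst; lra. Qed.

Lemma sq2pi_ge1 : 1 <= sqrt (2 * PI).
Proof. rewrite <- sqrt_1. apply sqrt_le_1_alt. pose proof PI2_1. lra. Qed.

Lemma sq2pi_pos : 0 < sqrt (2 * PI).
Proof. pose proof sq2pi_ge1; lra. Qed.

Lemma phi_pos x : 0 < phi x.
Proof. unfold phi. apply Rmult_lt_0_compat. apply Rinv_0_lt_compat, sq2pi_pos.
  apply exp_pos. Qed.

Lemma phi_le_exp x : phi x <= exp (- x ^ 2 / 2).
Proof. unfold phi. pose proof sq2pi_ge1. pose proof (exp_pos (- x ^ 2 / 2)).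
  assert (/ sqrt (2*PI) <= 1).
  { rewrite <- Rinv_1. apply Rinv_le_contravar; lra. }
  nra. Qed.

Lemma phi_le1 x : phi x <= 1.
Proof. eapply Rle_trans. apply phi_le_exp. rewrite <- exp_0. apply exp_le_mono.
  assert (0 <= x^2) by (simpl; nra). lra. Qed.

Lemma phi_deriv x : is_derive phi x (- x * phi x).
Proof. unfold phi. auto_derive. auto. change R in x. replace (x*(x*1)) with (x^2) by ring. unfold Rdiv. set (e := exp _). set (s := sqrt _). field. unfold s; pose proof sq2pi_pos; lra. Qed.

Lemma phi_cont x : continuous phi x.
Proof. apply (@ex_derive_continuous R_AbsRing R_NormedModule). eexists. apply phi_deriv. Qed.

Lemma phi_exRInt a b : ex_RInt phi a b.
Proof. apply (@ex_RInt_continuous R_CompleteNormedModule). intros; apply phi_cont. Qed.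

Definition II (M : R) := RInt phi (- M) 0.

Lemma II_bound M : 0 <= M -> II M <= exp (1/2).
Proof.
  intros HM. unfold II.
  assert (H: is_RInt (fun t => exp (t + 1/2)) (-M) 0 (minus (exp (0+1/2)) (exp (-M + 1/2)))).
  { apply (is_RInt_derive (fun t => exp (t + 1/2))).
    - intros x _. auto_derive. auto. ring.
    - intros x _. apply (@ex_derive_continuous R_AbsRing R_NormedModule). auto_derive. auto. }
  apply (@is_RInt_unique R_CompleteNormedModule) in H.
  eapply Rle_trans. apply (RInt_le phi (fun t => exp (t+1/2))). lra.
  apply phi_exRInt. apply (@ex_RInt_continuous R_CompleteNormedModule). intros; apply (@ex_derive_continuous R_AbsRing R_NormedModule); auto_derive; auto.
  intros x Hx. eapply Rle_trans. apply phi_le_exp. apply exp_le_mono. simpl. assert (0 <= (x+1)*(x+1)) by apply Rle_0_sqr. nra.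
  rewrite H. unfold minus, plus, opp; simpl. pose proof (exp_pos (-M+1/2)).
  replace (0+1/2) with (1/2) by lra. lra.
Qed.

Lemma II_mono M1 M2 : M1 <= M2 -> II M1 <= II M2.
Proof.
  intros H. unfold II.
  rewrite <- (RInt_Chasles phi (-M2) (-M1) 0) by apply phi_exRInt.
  unfold plus; simpl.
  assert (0 <= RInt phi (-M2) (-M1)).
  { apply RInt_ge_0. lra. apply phi_exRInt. intros; left; apply phi_pos. }
  lra.
Qed.

Lemma II1_pos : 0 < II 1.
Proof. unfold II. apply RInt_gt_0. lra. intros; apply phi_pos. intros; apply phi_cont. Qed.

Lemma Phi_repr : exists C, 0 < C /\ forall x, Phi x = C + RInt phi 0 x.
Proof.
  set (E := fun y => exists M, 0 <= M /\ y = II M).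
  assert (Hb : bound E).
  { exists (exp (1/2)). intros y [M [HM ->]]. now apply II_bound. }
  assert (He : exists y, E y). { exists (II 1). exists 1. split; [lra|auto]. }
  destruct (completeness E Hb He) as [L [HL1 HL2]].
  assert (Hconv : forall eps, 0 < eps -> exists M0, 0 <= M0 /\ forall M, M0 <= M ->
            Rabs (II M - L) < eps).
  { intros eps Heps.
    destruct (Rlt_dec (L - eps) (II 0)) as [Hl|Hl].
    - exists 0. split; [lra|]. intros M HM.
      assert (II M <= L) by (apply HL1; exists M; split; auto; lra).
      pose proof (II_mono _ _ HM). apply Rabs_def1; lra.
    - assert (exists M0, 0 <= M0 /\ L - eps < II M0) as [M0 [HM0 HM0']].
      { apply NNPP. intros Hn. assert (L <= L - eps). apply HL2.
        intros y [M [HM ->]]. apply Rnot_lt_le. intros Hc. apply Hn. exists M; auto. lra. }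
      exists M0. split; auto. intros M HM.
      assert (II M <= L) by (apply HL1; exists M; split; auto; lra).
      pose proof (II_mono _ _ HM). apply Rabs_def1; lra. }
  exists L. split.
  { assert (II 1 <= L) by (apply HL1; exists 1; split; auto; lra). pose proof II1_pos; lra. }
  intros x.
  assert (Hw : forall M w, RInt_is phi (-M) x w -> w = II M + RInt phi 0 x).
  { intros M w [pr Hpr]. rewrite <- Hpr, <- RInt_Reals. unfold II.
    rewrite <- (RInt_Chasles phi (-M) 0 x) by apply phi_exRInt. reflexivity. }
  assert (Hgood : Phi_is x (L + RInt phi 0 x)).
  { intros eps Heps. destruct (Hconv eps Heps) as [M0 [HM0 HM]].
    exists M0. intros M HMM. exists (II M + RInt phi 0 x). split.
    - exists (ex_RInt_Reals_0 _ _ _ (phi_exRInt (-M) x)).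
      rewrite <- RInt_Reals. unfold II.
      rewrite <- (RInt_Chasles phi (-M) 0 x) by apply phi_exRInt. reflexivity.
    - specialize (HM M HMM). replace (II M + RInt phi 0 x - (L + RInt phi 0 x)) with (II M - L) by ring. auto. }
  assert (Hspec : Phi_is x (Phi x)).
  { unfold Phi. apply epsilon_spec. eauto. }
  apply Rminus_diag_uniq_sym. apply NNPP. intros Hne.
  set (d := Rabs (L + RInt phi 0 x - Phi x)).
  assert (Hd : 0 < d) by (apply Rabs_pos_lt; auto).
  destruct (Hspec (d/2)) as [M1 HM1]. lra.
  destruct (Hconv (d/2)) as [M0 [HM0 HM0']]. lra.
  destruct (HM1 (Rmax M1 M0) (Rmax_l _ _)) as [w [Hw1 Hw2]].
  apply Hw in Hw1. subst w.
  specialize (HM0' (Rmax M1 M0) (Rmax_r _ _)).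
  unfold d in *. 
  assert (Rabs (L + RInt phi 0 x - Phi x) <= Rabs (II (Rmax M1 M0) + RInt phi 0 x - Phi x) + Rabs (II (Rmax M1 M0) - L)).
  { replace (L + RInt phi 0 x - Phi x) with ((II (Rmax M1 M0) + RInt phi 0 x - Phi x) - (II (Rmax M1 M0) - L)) by ring.
    eapply Rle_trans. apply Rabs_triang. rewrite Rabs_Ropp. lra. }
  lra.
Qed.


Section S.
Variable lam : R.
Hypothesis Hlam : 0 < lam.

Lemma s_pos : 0 < sqrt lam. Proof. now apply sqrt_lt_R0. Qed.

Lemma nn_pos b : 0 <= b -> lam <= nn lam b.
Proof. intros. unfold nn. pose proof s_pos. nra. Qed.

Lemma rho_der b : 0 <= b -> is_derive (rho lam) b (- lam * sqrt lam / (nn lam b)^2).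
Proof. intros Hb. pose proof (nn_pos b Hb). unfold rho, nn in *. auto_derive. lra. field. lra. Qed.

Definition QQ b := -2 * nn lam b * (1 - rho lam b + ln (rho lam b)).

Lemma rho_pos b : 0 <= b -> 0 < rho lam b.
Proof. intros. pose proof (nn_pos b H). unfold rho. apply Rdiv_lt_0_compat; lra. Qed.

Lemma QQ_der b : 0 <= b -> is_derive QQ b (-2 * sqrt lam * ln (rho lam b)).
Proof. intros Hb. pose proof (nn_pos b Hb). pose proof (rho_pos b Hb). unfold QQ, rho, nn in *.
  auto_derive. repeat split; try lra; auto. unfold Rdiv. set (L := ln _). field. lra. Qed.

Lemma QQ_pos b : 0 < b -> 0 < QQ b.
Proof. intros Hb. pose proof (nn_pos b (Rlt_le _ _ Hb)). pose proof (rho_pos b (Rlt_le _ _ Hb)).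
  assert (rho lam b < 1).
  { unfold rho. apply Rlt_div_l. lra. unfold nn. pose proof s_pos. nra. }
  assert (1 + ln (rho lam b) < rho lam b).
  { rewrite <- (exp_ln (rho lam b)) at 2 by auto. apply exp_ineq1.
    apply ln_neq_0; lra. }
  unfold QQ. nra. Qed.

Lemma aa_QQ b : aa lam b = sqrt (QQ b).
Proof. reflexivity. Qed.

Lemma isd_eq (f : R -> R) x (l l' : R) : l = l' -> is_derive f x l -> is_derive f x l'.
Proof. intros ->; auto. Qed.

Lemma aa_der b : 0 < b -> is_derive (aa lam) b (- sqrt lam * ln (rho lam b) / aa lam b).
Proof. intros Hb. pose proof (QQ_pos b Hb). pose proof (sqrt_lt_R0 _ H).
  assert (Hs : is_derive sqrt (QQ b) (/ (2 * sqrt (QQ b)))).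
  { auto_derive. auto. field. lra. }
  pose proof (is_derive_comp sqrt QQ b _ _ Hs (QQ_der b (Rlt_le _ _ Hb))) as Hc.
  apply (is_derive_ext (fun b => sqrt (QQ b))). reflexivity.
  eapply isd_eq; [| exact Hc]. rewrite aa_QQ. unfold scal; simpl. unfold mult; simpl. field. lra. Qed.

Lemma gam_der b : 0 <= b -> is_derive (gam lam) b (sqrt lam * (nn lam b + lam) / (2 * nn lam b * sqrt (nn lam b))).
Proof. intros Hb. pose proof (nn_pos b Hb). assert (0 < sqrt (nn lam b)) by (apply sqrt_lt_R0; lra).
  assert (Hsq : sqrt (nn lam b) * sqrt (nn lam b) = nn lam b) by (apply sqrt_sqrt; lra).
  unfold gam. unfold nn in *. auto_derive. repeat split; try lra.
  set (S := sqrt (lam + b * sqrt lam)) in *. set (T := sqrt lam) in *.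
  rewrite <- Hsq. field. lra. Qed.

Lemma Phi_der_gen C : (forall x, Phi x = C + RInt phi 0 x) -> forall x, is_derive Phi x (phi x).
Proof. intros HC x. apply (is_derive_ext (fun x => C + RInt phi 0 x)). intros; now rewrite HC.
  assert (H1 : is_derive (fun _ : R => C) x 0) by apply (@is_derive_const R_AbsRing R_NormedModule).
  assert (H2 : is_derive (RInt phi 0) x (phi x)).
  { apply (is_derive_RInt phi (RInt phi 0) 0 x). exists (mkposreal 1 Rlt_0_1). intros y _.
    apply (@RInt_correct R_CompleteNormedModule), phi_exRInt. apply phi_cont. }
  pose proof (@is_derive_plus R_AbsRing R_NormedModule _ _ x _ _ H1 H2) as H3.
  eapply isd_eq; [| exact H3]. unfold plus; simpl. ring. Qed.

Lemma G_der C (HC : forall x, Phi x = C + RInt phi 0 x) b : 0 < b ->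
  is_derive (G lam) b
   ((- lam * sqrt lam / (nn lam b)^2) * phi (aa lam b)
    + rho lam b * ((- sqrt lam * ln (rho lam b) / aa lam b) * (- aa lam b * phi (aa lam b)))
    + (sqrt lam * (nn lam b + lam) / (2 * nn lam b * sqrt (nn lam b))) * Phi (aa lam b)
    + gam lam b * ((- sqrt lam * ln (rho lam b) / aa lam b) * phi (aa lam b))).
Proof.
  intros Hb. pose proof (aa_der b Hb) as Ha.
  pose proof (is_derive_comp phi (aa lam) b _ _ (phi_deriv (aa lam b)) Ha) as H1.
  pose proof (is_derive_comp Phi (aa lam) b _ _ (Phi_der_gen C HC (aa lam b)) Ha) as H2.
  pose proof (@is_derive_mult R_AbsRing (rho lam) (fun b => phi (aa lam b)) b _ _ (rho_der b (Rlt_le _ _ Hb)) H1 ltac:(intros; apply Rmult_comm)) as H3.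
  pose proof (@is_derive_mult R_AbsRing (gam lam) (fun b => Phi (aa lam b)) b _ _ (gam_der b (Rlt_le _ _ Hb)) H2 ltac:(intros; apply Rmult_comm)) as H4.
  pose proof (@is_derive_plus R_AbsRing R_NormedModule _ _ b _ _ H3 H4) as H5.
  apply (is_derive_ext _ _ _ _ (fun t => eq_refl) ) in H5.
  unfold G. eapply isd_eq; [| exact H5]. unfold plus, mult, scal; simpl. unfold mult; simpl. ring.
Qed.
End S.

Lemma ln_ineq x : 1 <= x -> 2*(ln x - 1 + /x) <= (x-1)^2.
Proof.
  intros [Hx|Hx]; [| subst; rewrite ln_1; rewrite Rinv_1; lra].
  set (h := fun t => (t-1)^2 - 2*(ln t - 1 + /t)).
  destruct (MVT_cor2 h (fun t => 2*(t-1) - 2*(/t - /t^2)) 1 x Hx) as [c [Heq Hc]].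
  { intros c Hc. apply is_derive_Reals. unfold h. auto_derive. lra.
    field. lra. }
  assert (h 1 = 0) by (unfold h; rewrite ln_1, Rinv_1; ring).
  assert (0 <= 2*(c-1) - 2*(/c - /c^2)).
  { set (u := /c). assert (Hu : c * u = 1) by (unfold u; field; lra).
    assert (0 < u) by (unfold u; apply Rinv_0_lt_compat; lra).
    replace (/c^2) with (u*u) by (unfold u; field; lra).
    assert (1 - u = u * (c - 1)) by nra.
    assert (u <= 1) by nra.
    nra. }
  assert (0 <= h x - h 1) by (rewrite Heq; apply Rmult_le_pos; lra).
  unfold h in *. lra.
Qed.

Lemma D_pos C lam b : 0 < C -> (forall x, Phi x = C + RInt phi 0 x) ->
  4 / C^2 < lam -> 0 < b ->
  0 < (- lam * sqrt lam / (nn lam b)^2) * phi (aa lam b)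
    + rho lam b * ((- sqrt lam * ln (rho lam b) / aa lam b) * (- aa lam b * phi (aa lam b)))
    + (sqrt lam * (nn lam b + lam) / (2 * nn lam b * sqrt (nn lam b))) * Phi (aa lam b)
    + gam lam b * ((- sqrt lam * ln (rho lam b) / aa lam b) * phi (aa lam b)).
Proof.
  intros HC0 HC Hlam Hb.
  assert (Hl0 : 0 < lam). { apply Rlt_trans with (4/C^2); auto. apply Rdiv_lt_0_compat; [lra| apply pow_lt; lra]. }
  pose proof (nn_pos lam Hl0 b (Rlt_le _ _ Hb)) as Hn.
  pose proof (QQ_pos lam Hl0 b Hb) as HQ.
  pose proof (s_pos lam Hl0) as Hs.
  assert (Hss : sqrt lam * sqrt lam = lam) by (apply sqrt_sqrt; lra).
  assert (Hnl : lam < nn lam b) by (unfold nn; nra).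
  set (n := nn lam b) in *.
  assert (Hq : 0 < sqrt n) by (apply sqrt_lt_R0; lra).
  assert (Hqq : sqrt n * sqrt n = n) by (apply sqrt_sqrt; lra).
  set (q := sqrt n) in *. set (s := sqrt lam) in *.
  assert (Ha : 0 < aa lam b) by (rewrite aa_QQ; apply sqrt_lt_R0; auto).
  assert (Haa : aa lam b * aa lam b = QQ lam b) by (rewrite aa_QQ; apply sqrt_sqrt; lra).
  set (a := aa lam b) in *.
  assert (Hr : rho lam b = lam / n) by reflexivity.
  assert (Hr0 : 0 < rho lam b) by (rewrite Hr; apply Rdiv_lt_0_compat; lra).
  assert (Hr1 : rho lam b < 1) by (rewrite Hr; apply Rlt_div_l; lra).
  assert (HL : ln (rho lam b) < 0) by (rewrite <- ln_1; apply ln_increasing; lra).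
  assert (HQQ : QQ lam b = -2 * n * (1 - rho lam b + ln (rho lam b))) by reflexivity.
  set (r := rho lam b) in *. set (L := ln r) in *.
  assert (Hg : gam lam b = (n - lam) / q) by reflexivity.
  set (g := gam lam b) in *.
  pose proof (phi_pos a) as Hp0. pose proof (phi_le1 a) as Hp1.
  set (p := phi a) in *.
  assert (HP : C <= Phi a).
  { rewrite HC. assert (0 <= RInt phi 0 a). apply RInt_ge_0. lra. apply phi_exRInt.
    intros; left; apply phi_pos. lra. }
  set (P := Phi a) in *.
  assert (Hlam_rn : lam = r * n) by (rewrite Hr; field; lra).
  assert (Hgra : r * a <= g).
  { pose proof (ln_ineq (/r)) as Hli.
    assert (1 <= /r). { rewrite <- Rinv_1. apply Rinv_le_contravar; lra. }
    specialize (Hli H). rewrite ln_Rinv in Hli by lra. fold L in Hli.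
    assert (Hli2 : 2 * r^2 * (- L - 1 + r) <= (1 - r)^2).
    { replace ((1-r)^2) with (r^2 * (/r - 1)^2) by (field; lra).
      replace (2 * r^2 * (- L - 1 + r)) with (r^2 * (2 * (-L - 1 + /(/r)))) by (rewrite Rinv_inv; ring).
      apply Rmult_le_compat_l. nra. auto. }
    assert (Hg2 : g * g = n * (1 - r)^2).
    { rewrite Hg. rewrite Hlam_rn. replace ((n - r*n)/q * ((n - r*n)/q)) with ((n - r*n)^2/(q*q)) by (field; lra).
      rewrite Hqq. field. lra. }
    assert (Hra2 : (r*a)*(r*a) = -2 * n * r^2 * (1 - r + L)).
    { replace ((r*a)*(r*a)) with (r^2 * (a*a)) by ring. rewrite Haa, HQQ. ring. }
    assert (0 <= g) by (rewrite Hg; apply Rdiv_le_0_compat; lra).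
    assert (0 <= r * a) by nra.
    assert ((r*a)*(r*a) <= g*g) by nra.
    nra. }
  assert (HT2 : r * ((- s * L / a) * (- a * p)) + g * ((- s * L / a) * p) = s * (-L) * p * (g - r * a) / a)
    by (field; lra).
  assert (HT2p : 0 <= s * (-L) * p * (g - r * a) / a).
  { apply Rdiv_le_0_compat; [| lra]. apply Rmult_le_pos; [apply Rmult_le_pos; [apply Rmult_le_pos|]|]; lra. }
  assert (HCq : 2 < C * q).
  { assert (4 < (C*q)*(C*q)).
    { replace ((C*q)*(C*q)) with (C^2 * n) by (rewrite <- Hqq; ring).
      apply Rmult_lt_reg_r with (/ C^2). apply Rinv_0_lt_compat, pow_lt; lra.
      replace (C^2 * n * / C^2) with n by (field; lra). unfold Rdiv in Hlam. lra. }
    assert (0 < C*q) by nra. nra. }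
  assert (Hg' : s / (2*q) * C <= (s * (n + lam) / (2 * n * q)) * P).
  { apply Rle_trans with ((s * (n + lam) / (2 * n * q)) * C).
    - apply Rmult_le_compat_r; [lra|].
      replace (s / (2*q)) with (s * n / (2 * n * q)) by (field; lra).
      apply Rmult_le_compat_r. left; apply Rinv_0_lt_compat; nra. nra.
    - apply Rmult_le_compat_l; [| lra]. apply Rdiv_le_0_compat; nra. }
  assert (Hkey : lam * s / n^2 < s / (2*q) * C).
  { apply Rmult_lt_reg_r with (2 * q * n^2). nra.
    replace (lam * s / n^2 * (2*q*n^2)) with (2 * q * lam * s) by (field; lra).
    replace (s / (2*q) * C * (2*q*n^2)) with (s * (C * n^2)) by (field; lra).
    assert (C * n^2 = (C*q) * q * n) by (rewrite <- Hqq; ring).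
    assert (2 * q * lam < C * n^2) by nra. nra. }
  assert (HT1 : - lam * s / n^2 <= - lam * s / n^2 * p).
  { assert (0 <= lam * s / n^2) by (apply Rdiv_le_0_compat; nra).
    replace (- lam * s / n^2) with (- (lam * s / n^2)) by (unfold Rdiv; ring). nra. }
  lra.
Qed.

Theorem lemma3 : exists lam0 : R, 0 < lam0 /\
  forall lam : R, lam0 <= lam ->
  forall b1 b2 : R, 0 < b1 -> b1 < b2 -> G lam b1 < G lam b2.
Proof.
  destruct Phi_repr as [C [HC0 HC]].
  assert (H4 : 0 < 4 / C^2) by (apply Rdiv_lt_0_compat; [lra| apply pow_lt; lra]).
  exists (4 / C^2 + 1). split. lra.
  intros lam Hlam b1 b2 Hb1 Hb12.
  assert (Hl0 : 0 < lam) by lra.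
  destruct (MVT_cor2 (G lam) (fun b => (- lam * sqrt lam / (nn lam b)^2) * phi (aa lam b)
    + rho lam b * ((- sqrt lam * ln (rho lam b) / aa lam b) * (- aa lam b * phi (aa lam b)))
    + (sqrt lam * (nn lam b + lam) / (2 * nn lam b * sqrt (nn lam b))) * Phi (aa lam b)
    + gam lam b * ((- sqrt lam * ln (rho lam b) / aa lam b) * phi (aa lam b))) b1 b2 Hb12)
    as [c [Heq Hc]].
  { intros c Hc. apply is_derive_Reals. apply (G_der lam Hl0 C HC). lra. }
  assert (Hd := D_pos C lam c HC0 HC ltac:(lra) ltac:(lra)).
  assert (0 < G lam b2 - G lam b1) by (rewrite Heq; apply Rmult_lt_0_compat; lra).
  lra.
Qed.
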